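(* There exists an absolute constant $c>0$ such that the following holds. Let $G$ be an abelian group and let $A,B\subseteq G$ be finite nonempty sets with $|A|=|B|$. Let $\kappa=|A+B|/|A|$. Then for each integer $s\ge1$ there exist subsets $A_{(s)}\subseteq A$ and $B_{(s)}\subseteq B$, each of size at most $s$, such that \[ \max\big(|A+B_{(s)}|,\,|B+A_{(s)}|\big)\ge c\min(\kappa^{1/3},s)\,|A|. \]
   Context: For subsets $X,Y$ of an abelian group, $X+Y=\{x+y:x\in X,y\in Y\}$. *)

(* Defs.v *)
From HB Require Import structures.
From mathcomp Require Import all_boot all_algebra.
From mathcomp Require Import finmap.
From Stdlib Require Import Reals.
Set Implicit Arguments. Unset Strict Implicit. Unset Printing Implicit Defensive.

Local Open Scope fset_scope.

Definition sumset (G : zmodType) (X Y : {fset G}) : {fset G} :=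
  [fset GRing.add x y | x in X, y in Y].

(* Main.v *)
Require Import Defs.
From HB Require Import structures.
From mathcomp Require Import all_boot all_algebra.
From mathcomp Require Import finmap.
From mathcomp Require Import zify.
From Stdlib Require Import Classical.
Set Implicit Arguments. Unset Strict Implicit. Unset Printing Implicit Defensive.
Section Comb.
Local Open Scope fset_scope.

Section Fib.
Local Open Scope nat_scope.
Variables (T1 T2 : choiceType) (E : {fset T2}) (P : T1 -> T2 -> bool).

Definition fib (C : {fset T1}) := [fset q in C `*` E | P q.1 q.2].

Lemma fib_split x C : x \notin C ->
  #|` fib (x |` C)| = (#|` [fset y in E | P x y]| + #|` fib C|)%N.
Proof.
move=> xC.
pose D1 := [fset (x, y) | y in [fset y in E | P x y]].
have -> : fib (x |` C) = D1 `|` fib C.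
  apply/fsetP=> [[a b]]; rewrite !inE /=.
  apply/idP/idP.
  - case/andP=> /andP[/orP[/eqP ->|aC] bE] Pab.
      by apply/orP; left; apply/imfsetP; exists b; rewrite //= !inE bE.
    by rewrite aC bE Pab orbT.
  - case/orP.
      by case/imfsetP=> y /=; rewrite !inE => /andP[yE Py] [-> ->]; rewrite eqxx yE Py.
    by case/andP=> /andP[-> ->] ->; rewrite orbT.
have dis : D1 `&` fib C = fset0.
  apply/fsetP=> [[a b]]; rewrite !inE /=; apply/negbTE; apply/negP=> /andP[].
  by case/imfsetP=> y _ [-> _] /andP[/andP[aC _] _]; rewrite aC in xC.
have cD1 : #|` D1| = #|` [fset y in E | P x y]|.
  by apply/eqP/card_in_imfsetP=> u v _ _ [].
by rewrite -cD1 -(cardfsUI D1) dis cardfs0 addn0.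
Qed.

Lemma fib_ge C K : (forall x, x \in C -> K <= #|` [fset y in E | P x y]|) ->
  #|` C| * K <= #|` fib C|.
Proof.
elim/fset1U_rect: C => [|x C xC IH] H.
  by rewrite cardfs0.
rewrite fib_split // cardfsU1 xC /= mulSn leq_add //.
  by apply: H; rewrite fset1U1.
by apply: IH=> y yC; apply: H; rewrite fset1Ur.
Qed.

Lemma fib_le C K : (forall x, x \in C -> #|` [fset y in E | P x y]| <= K) ->
  #|` fib C| <= #|` C| * K.
Proof.
elim/fset1U_rect: C => [|x C xC IH] H.
  rewrite cardfs0 leqn0 cardfs_eq0; apply/eqP/fsetP=> q; idtac.
  by case: q => a b; rewrite /fib !inE.

rewrite fib_split // cardfsU1 xC /= mulSn leq_add //.
  by apply: H; rewrite fset1U1.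
by apply: IH=> y yC; apply: H; rewrite fset1Ur.
Qed.
End Fib.

Section G.
Variable G : zmodType.
Local Open Scope nat_scope.

Lemma sumsetP (A S : {fset G}) x :
  reflect (exists a b, [/\ a \in A, b \in S & x = (a + b)%R]) (x \in sumset A S).
Proof.
apply: (iffP (imfset2P _ _ _ _ _)).
  by move=> [a aA [b bS ->]]; exists a, b.
by move=> [a [b [aA bS ->]]]; exists a => //; exists b.
Qed.

Lemma sumset_new (A S : {fset G}) b :
  #|` sumset A S| + #|` [fset a in A | (a + b)%R \notin sumset A S]|
  <= #|` sumset A (b |` S)|.
Proof.
set X := sumset A S; set N := [fset a in A | _].
pose I := [fset (a + b)%R | a in N].
have cI : #|` I| = #|` N|.
  by apply/eqP/card_in_imfsetP=> u v _ _ /= /GRing.addIr.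
have dis : X `&` I = fset0.
  apply/fsetP=> y; rewrite !inE; apply/negbTE/negP=> /andP[yX].
  by case/imfsetP=> a /=; rewrite !inE => /andP[_ aX] e; rewrite -e yX in aX.
rewrite -cI; have := cardfsUI X I; rewrite dis cardfs0 addn0 => <-.
apply: fsubset_leq_card; apply/fsubsetP=> y; rewrite inE => /orP[].
  case/sumsetP=> a [c [aA cS ->]]; apply/sumsetP; exists a, c.
  by rewrite fset1Ur.
case/imfsetP=> a /=; rewrite !inE => /andP[aA _] ->; apply/sumsetP; exists a, b.
by rewrite fset1U1.
Qed.

Lemma greedy (A B : {fset G}) t :
  (forall S, S `<=` B -> #|` S| <= t -> 4 * #|` sumset A S| < t * #|` A|) ->
  exists X : {fset G}, 4 * #|` X| < t * #|` A| /\
    forall b, b \in B -> 4 * #|` [fset a in A | (a + b)%R \notin X]| < #|` A|.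
Proof.
move=> H.
set n := #|` A|.
suff [X [H1 H2]] : exists X : {fset G}, 4 * #|` X| < t * n /\
    all (fun b => 4 * #|` [fset a in A | (a + b)%R \notin X]| < n) B.
  by exists X; split=> // b bB; move/allP: H2 => /(_ b bB).
have claim : forall i, i <= t -> (exists X : {fset G}, 4 * #|` X| < t * n /\
    all (fun b => 4 * #|` [fset a in A | (a + b)%R \notin X]| < n) B) \/
    exists S, [/\ S `<=` B, #|` S| <= i & i * n <= 4 * #|` sumset A S|].
  elim=> [|i IH] hi.
    by right; exists fset0; rewrite fsub0set cardfs0 mul0n.
  case: (IH (ltnW hi)) => [L|[S [SB Si Hi]]]; first by left.
  have HX := H S SB (leq_trans Si (ltnW hi)).
  case: (boolP (all (fun b => 4 * #|` [fset a in A | (a + b)%R \notin sumset A S]| < n) B))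
    => [Hall|]; first by left; exists (sumset A S).
  case/allPn => b bB /=; rewrite -leqNgt => hb.
  right; exists (b |` S); split.
  - by rewrite fsubUset fsub1set bB SB.
  - by rewrite cardfsU1 -addn1 addnC leq_add // leq_b1.
  - move: (sumset_new A S b) => Hn; rewrite mulSn; apply: leq_trans _ (leq_mul (leqnn 4) Hn); rewrite mulnDr addnC; exact: leq_add.
case: (claim t (leqnn t)) => [//|[S [SB St Ht]]].
have := H S SB St; rewrite -/n; lia.
Qed.

Lemma card_sep (T : choiceType) (A : {fset T}) (p : pred T) :
  #|` [fset a in A | p a]| + #|` [fset a in A | ~~ p a]| = #|` A|.
Proof.
have := cardfsUI [fset a in A | p a] [fset a in A | ~~ p a].
have -> : [fset a in A | p a] `|` [fset a in A | ~~ p a] = A.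
  by apply/fsetP=> a; rewrite !inE; case: (p a); rewrite ?andbT ?andbF ?orbF.
have -> : [fset a in A | p a] `&` [fset a in A | ~~ p a] = fset0.
  by apply/fsetP=> a; rewrite !inE; case: (p a); rewrite ?andbF ?andbT ?andbF.
by rewrite cardfs0 addn0.
Qed.

Lemma card_and (T : choiceType) (B : {fset T}) (p q : pred T) :
  #|` [fset b in B | p b]| + #|` [fset b in B | q b]| <=
  #|` [fset b in B | p b && q b]| + #|` B|.
Proof.
rewrite -cardfsUI addnC leq_add //.
    apply: fsubset_leq_card; apply/fsubsetP=> b; rewrite !inE.
  by move=> /and3P[/andP[h1 h2] _ h3]; rewrite h1 h2 h3.
apply: fsubset_leq_card; apply/fsubsetP=> b; rewrite !inE.
by move=> /orP[/andP[]|/andP[]].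
Qed.

Lemma card_fsetM_le (T1 T2 : choiceType) (C : {fset T1}) (E : {fset T2}) :
  #|` C `*` E| <= #|` C| * #|` E|.
Proof.
have -> : C `*` E = fib E (fun _ _ => true) C.
  by apply/fsetP=> q; rewrite /fib !inE andbT.
apply: fib_le => x _; apply: fsubset_leq_card; apply/fsubsetP=> y.
by rewrite !inE andbT.
Qed.


Lemma arith1 n u v w : 3 * n < 4 * v -> 3*n < 4*u -> u + v <= w + n -> n.+1 %/ 2 <= w.
Proof. move=> *; lia. Qed.

Lemma arith2 n u : 3 * n < 4 * u -> ((3 * n) %/ 4).+1 <= u.
Proof. move=> *; lia. Qed.

Lemma key4 (a0 b0 a1 b1 : G) :
  (a0 + b0)%R = ((a0 + b1) - (a1 + b1) + (a1 + b0))%R.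
Proof.
have -> : ((a0 + b1) - (a1 + b1) = a0 - a1)%R.
  by rewrite GRing.opprD GRing.addrACA GRing.subrr GRing.addr0.
by rewrite GRing.addrA GRing.subrK.
Qed.

Section Count.
Variables (A B : {fset G}).

Definition repL := enum_fset (A `*` B).
Definition rep (x : G) : G * G :=
  nth (0%R, 0%R) repL (find (fun p : G * G => (p.1 + p.2 == x)%R) repL).

Lemma repP x : x \in sumset A B ->
  [/\ (rep x).1 \in A, (rep x).2 \in B & x = ((rep x).1 + (rep x).2)%R].
Proof.
case/sumsetP=> a [b [aA bB ->]].
have hs : has (fun p : G * G => (p.1 + p.2 == a + b)%R) repL.
  apply/hasP; exists (a, b); last by rewrite /= eqxx.
  by rewrite /repL -/((a, b) \in A `*` B) in_fsetM /= aA bB.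
have h1 := nth_find (0%R, 0%R) hs.
have h2 : rep (a + b)%R \in A `*` B.
  by apply: (mem_nth (0%R, 0%R)); rewrite -has_find.
rewrite in_fsetM in h2; case/andP: h2 => -> ->; split=> //.
by apply/esym/eqP.
Qed.

Lemma count_main (X Y : {fset G}) n :
  #|` A| = n -> #|` B| = n ->
  (forall b, b \in B -> 3 * n < 4 * #|` [fset a in A | (a + b)%R \in X]|) ->
  (forall a, a \in A -> 3 * n < 4 * #|` [fset b in B | (a + b)%R \in Y]|) ->
  #|` sumset A B| * (((3 * n) %/ 4).+1 * (n.+1 %/ 2)) <= #|` Y| * (#|` Y| * #|` X|).
Proof.
move=> cA cB dX dY.
set C := sumset A B.
pose P x (p : G * G) := [&& (p.1 + (rep x).2)%R \in X, ((rep x).1 + p.2)%R \in Y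
   & (p.1 + p.2)%R \in Y].
pose D := fib (A `*` B) P C.
have low : #|` C| * (((3 * n) %/ 4).+1 * (n.+1 %/ 2)) <= #|` D|.
  apply: fib_ge => x xC.
  case: (repP xC) => a0A b0B _.
  set a0 := (rep x).1 in a0A *; set b0 := (rep x).2 in b0B *.
  pose C' := [fset a in A | (a + b0)%R \in X].
  have h1 : #|` C'| * (n.+1 %/ 2) <=
      #|` fib B (fun a b => ((a0 + b)%R \in Y) && ((a + b)%R \in Y)) C'|.
    apply: fib_ge => a; rewrite inE => /andP[aA _].
    have := card_and B (fun b => (a0 + b)%R \in Y) (fun b => (a + b)%R \in Y).
    have := dY a0 a0A; have := dY a aA; rewrite cB /=.
    move=> h1 h2 h3; exact: (arith1 h1 h2 h3).
  have h2 : fib B (fun a b => ((a0 + b)%R \in Y) && ((a + b)%R \in Y)) C'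
      `<=` [fset p in A `*` B | P x p].
    apply/fsubsetP=> [[a b]]; rewrite /fib /P !inE /= -/a0 -/b0.
    by move=> /andP[/andP[/andP[-> ->] ->] /andP[-> ->]].
  have h3 : ((3 * n) %/ 4).+1 <= #|` C'|.
    exact: arith2 (dX b0 b0B).
  apply: leq_trans (fsubset_leq_card h2).
  apply: leq_trans h1; exact: leq_mul.
have up : #|` D| <= #|` Y `*` (Y `*` X)|.
  pose f (q : G * (G * G)) := (((rep q.1).1 + q.2.2)%R,
       ((q.2.1 + q.2.2)%R, (q.2.1 + (rep q.1).2)%R)).
  have inj : {in D &, injective f}.
    move=> [x [a1 b1]] [x' [a1' b1']]; rewrite /D /fib !inE /=.
    move=> /andP[/andP[xC _] _] /andP[/andP[x'C _] _] [e1 e2 e3].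
    have ex : x = x'.
      case: (repP xC) => _ _ ->; case: (repP x'C) => _ _ ->.
      by rewrite (key4 _ _ a1 b1) (key4 (rep x').1 _ a1' b1') e1 e2 e3.
    subst x'.
    by rewrite (GRing.addrI _ e1) (GRing.addIr _ e3).
  move/card_in_imfsetP: inj => /eqP <-.
  apply: fsubset_leq_card; apply/fsubsetP=> y /imfsetP [[x [a b]]].
  rewrite /D /fib /P !inE /= => /andP[_ /and3P[h1 h2 h3]] ->.
  by rewrite /f /= h1 h2 h3.
apply: leq_trans low _; apply: leq_trans up _.
apply: leq_trans (card_fsetM_le _ _) _; rewrite leq_mul2l card_fsetM_le orbT //.
Qed.
End Count.
Lemma arith_final t n c x y :
  t ^ 3 * n <= c ->
  c * (((3 * n) %/ 4).+1 * (n.+1 %/ 2)) <= y * (y * x) ->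
  4 * x < t * n -> 4 * y < t * n -> False.
Proof.
move=> h1 h2 hx hy.
move: h2; set a := ((3 * n) %/ 4).+1; set b := n.+1 %/ 2 => h2.
have ha : n <= 4 * a by rewrite /a; lia.
have hb : n <= 2 * b by rewrite /b; lia.
have hab : n * n <= (4 * a) * (2 * b) by exact: leq_mul.
have h3 : (4 * y) * (4 * y) * (4 * x) < (t * n) * (t * n) * (t * n).
  by apply: ltn_mul => //; apply: ltn_mul.
have h4 : t ^ 3 * n * (n * n) <= c * ((4 * a) * (2 * b)).
  exact: leq_mul.
have h5 : c * ((4 * a) * (2 * b)) <= 8 * (y * (y * x)).
  rewrite (_ : c * ((4 * a) * (2 * b)) = 8 * (c * (a * b))); last first.
    lia.
  by rewrite leq_mul2l h2.
have e1 : (4 * y) * (4 * y) * (4 * x) = 64 * (y * (y * x)).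
  lia.
have e2 : (t * n) * (t * n) * (t * n) = t ^ 3 * n * (n * n).
  rewrite !expnS expn0 muln1; lia.
move: h3; rewrite e1 e2 => h3.
lia.
Qed.

Lemma arith3 n u v : u + v = n -> 4 * v < n -> 3 * n < 4 * u.
Proof. move=> *; lia. Qed.

Lemma sumset_ge (A B : {fset G}) b : b \in B -> #|` A| <= #|` sumset A B|.
Proof.
move=> bB.
have <- : #|` [fset (a + b)%R | a in A]| = #|` A|.
  by apply/eqP/card_in_imfsetP=> u v _ _ /= /GRing.addIr.
apply: fsubset_leq_card; apply/fsubsetP=> y /imfsetP [a /= aA ->].
by apply/sumsetP; exists a, b.
Qed.

Lemma main_nat (A B : {fset G}) t : #|` A| = #|` B| ->
  t ^ 3 * #|` A| <= #|` sumset A B| ->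
  (exists S, [/\ S `<=` B, #|` S| <= t & t * #|` A| <= 4 * #|` sumset A S|]) \/
  (exists S, [/\ S `<=` A, #|` S| <= t & t * #|` A| <= 4 * #|` sumset B S|]).
Proof.
move=> cAB hM.
case: (classic (exists S, [/\ S `<=` B, #|` S| <= t & t * #|` A| <= 4 * #|` sumset A S|]))
  => [h|nh1]; first by left.
case: (classic (exists S, [/\ S `<=` A, #|` S| <= t & t * #|` A| <= 4 * #|` sumset B S|]))
  => [h|nh2]; first by right.
exfalso.
have [X [hX dX]] : exists X : {fset G}, 4 * #|` X| < t * #|` A| /\
    forall b, b \in B -> 4 * #|` [fset a in A | (a + b)%R \notin X]| < #|` A|.
  apply: greedy => S SB St; rewrite ltnNge; apply/negP=> hle; apply: nh1.
  by exists S.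
have [Y [hY dY]] : exists Y : {fset G}, 4 * #|` Y| < t * #|` B| /\
    forall a, a \in A -> 4 * #|` [fset b in B | (b + a)%R \notin Y]| < #|` B|.
  apply: greedy => S SA St; rewrite ltnNge; apply/negP=> hle; apply: nh2.
  by exists S; rewrite cAB.
have dX' : forall b, b \in B -> 3 * #|` A| < 4 * #|` [fset a in A | (a + b)%R \in X]|.
  move=> b bB; apply: (arith3 (card_sep A (fun a => (a + b)%R \in X))).
  exact: dX.
have dY' : forall a, a \in A -> 3 * #|` A| < 4 * #|` [fset b in B | (a + b)%R \in Y]|.
  move=> a aA.
  have e : [fset b in B | (a + b)%R \in Y] = [fset b in B | (b + a)%R \in Y].
    by apply/fsetP=> b; rewrite !inE GRing.addrC.
  rewrite e; apply: (arith3 (v := #|` [fset b in B | (b + a)%R \notin Y]|)).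
    by rewrite (card_sep B (fun b => (b + a)%R \in Y)) cAB.
  by rewrite cAB; exact: dY.
have hc := @count_main A B X Y #|` A| erefl (esym cAB) dX' dY'.
apply: (arith_final hM hc hX); by rewrite cAB.
Qed.
End G.

End Comb.
From Stdlib Require Import Reals Lra.
Section Real.
Local Open Scope R_scope.

Lemma real_part (n M t s : nat) (v : R) :
  0 < INR n -> 1 <= INR t -> INR t <= INR s -> INR n <= INR M ->
  (INR t = INR s \/ INR M < (INR t + 1) ^ 3 * INR n) ->
  INR t * INR n <= 4 * v ->
  1/8 * Rmin (Rpower (INR M / INR n) (1/3)) (INR s) * INR n <= v.
Proof.
intros hn ht hts hM hc hv.
assert (hm : Rmin (Rpower (INR M / INR n) (1/3)) (INR s) <= 2 * INR t).
{ destruct hc as [e | hl].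
  - apply Rle_trans with (INR s); [apply Rmin_r | lra].
  - apply Rle_trans with (Rpower (INR M / INR n) (1/3)); [apply Rmin_l|].
    assert (hk : 0 < INR M / INR n) by (apply Rdiv_lt_0_compat; lra).
    assert (hk2 : INR M / INR n < (INR t + 1) ^ 3).
    { apply (Rmult_lt_reg_r (INR n)); [lra|].
      unfold Rdiv; rewrite Rmult_assoc (Rinv_l (INR n)); last by apply: Rgt_not_eq; lra.
      lra. }
    assert (e : Rpower ((INR t + 1) ^ 3) (1/3) = INR t + 1).
    { rewrite -Rpower_pow; last lra. rewrite Rpower_mult.
      replace (INR 3 * (1/3)) with 1 by (simpl; field).
      apply Rpower_1; lra. }
    assert (Rpower (INR M / INR n) (1/3) < Rpower ((INR t + 1) ^ 3) (1/3)).
    { apply Rlt_Rpower_l; [lra | split; lra]. }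
    lra. }
assert (h2 : 1/8 * Rmin (Rpower (INR M / INR n) (1/3)) (INR s) * INR n <= 1/8 * (2 * INR t) * INR n).
{ apply Rmult_le_compat_r; lra. }
lra.
Qed.

End Real.
Theorem theorem1p2 :
  exists c : R, (0 < c)%R /\
  forall (G : zmodType) (A B : {fset G}),
    A != fset0 -> #|` A| = #|` B| ->
    let kappa := (INR #|` sumset A B| / INR #|` A|)%R in
    forall s : nat, (1 <= s)%N ->
      exists (As Bs : {fset G}),
        [/\ (As `<=` A)%fset, (Bs `<=` B)%fset, (#|` As| <= s)%N, (#|` Bs| <= s)%N &
        (c * Rmin (Rpower kappa (1/3)) (INR s) * INR #|` A|
           <= Rmax (INR #|` sumset A Bs|) (INR #|` sumset B As|))%R].
Proof.
exists (1/8)%R; split; first lra.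
move=> G A B A0 cAB kappa s s1.
set n := #|` A|.
have n0 : (0 < n)%N by rewrite cardfs_gt0.
have [b0 b0B] : exists b, b \in B.
  by apply/fset0Pn; rewrite -cardfs_gt0 -cAB.
have hM : (n <= #|` sumset A B|)%N := sumset_ge A b0B.
set M := #|` sumset A B|.
have exP : exists t, (t <= s) && (expn t 3 * n <= M) by exists 1; rewrite s1 exp1n mul1n hM.
have ubP : forall t, (t <= s) && (expn t 3 * n <= M) -> t <= s by move=> t /andP[].
case: (ex_maxnP exP ubP) => t /andP[ts tM] maxt.
have t1 : (1 <= t)%N by apply: maxt; rewrite s1 exp1n mul1n hM.
have hc : INR t = INR s \/ (INR M < (INR t + 1) ^ 3 * INR n)%R.
  case: (ltngtP t s) => [lts|//|->]; last by left.
    right.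
    have hlt : (M < expn t.+1 3 * n)%N.
      rewrite ltnNge; apply/negP=> h.
      by have := maxt t.+1; rewrite lts h => /(_ isT); rewrite ltnn.
    have := lt_INR _ _ (elimT ltP hlt).
    rewrite !expnS expn0 muln1 !mult_INR S_INR => h.
    replace ((INR t + 1) ^ 3)%R with ((INR t + 1) * ((INR t + 1) * (INR t + 1)))%R by ring.
    exact: h.
  by move: ts; rewrite leqNgt => /negP.
have rn : (0 < INR n)%R by apply: lt_0_INR; apply/ltP.
have rt : (1 <= INR t)%R by apply: (le_INR 1); apply/leP.
have rts : (INR t <= INR s)%R by apply: le_INR; apply/leP.
have rM : (INR n <= INR M)%R by apply: le_INR; apply/leP.
have r4 : INR 4 = 4%R by simpl; lra.
case: (main_nat cAB tM) => [[S [SB St Ht]]|[S [SA St Ht]]].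
- exists fset0, S; split.
  + by apply/fsubsetP=> x; rewrite inE.
  + exact: SB.
  + by rewrite cardfs0.
  + exact: leq_trans St ts.
  apply: Rle_trans (Rmax_l _ _).
  apply: (real_part rn rt rts rM hc).
  have := le_INR _ _ (elimT leP Ht); rewrite !mult_INR r4; exact.
- exists S, fset0; split.
  + exact: SA.
  + by apply/fsubsetP=> x; rewrite inE.
  + exact: leq_trans St ts.
  + by rewrite cardfs0.
  apply: Rle_trans (Rmax_r _ _).
  apply: (real_part rn rt rts rM hc).
  have := le_INR _ _ (elimT leP Ht); rewrite !mult_INR r4; exact.
Qed.
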